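(* Let $d\ge 2$ and let $\triangle=\mathrm{conv}(v_0,\dots,v_d)\subset B_2^d$ be a simplex that maximizes the mean width $w(\cdot)$ over all simplices contained in $B_2^d$. Then: (a) $B_2^d$ is the smallest ball containing $\triangle$; (b) $v_i\in\mathbb{S}^{d-1}$ for all $0\le i\le d$, i.e. $\mathbb{S}^{d-1}$ is the circumsphere of $\triangle$; (c) the closed hemispheres $\{u\in\mathbb{S}^{d-1}: u\cdot v_i\ge 0\}$, $0\le i\le d$, cover $\mathbb{S}^{d-1}$.
   Context: $B_2^d\subset\mathbb{R}^d$ is the closed Euclidean unit ball and $\mathbb{S}^{d-1}=\partial B_2^d$; $\mu$ is the uniform probability measure on $\mathbb{S}^{d-1}$. For a convex body $K\subset B_2^d$, its support function is $h_K(u)=\max_{x\in K}u\cdot x$ and its mean width is $w(K)=2\int_{\mathbb{S}^{d-1}}h_K(u)\,d\mu(u)$. *)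

(* Defs.v *)
From HB Require Import structures.
From mathcomp Require Import all_boot all_order all_algebra.
From mathcomp Require Import all_classical all_reals all_analysis.
Import Order.TTheory GRing.Theory Num.Theory.
Import numFieldNormedType.Exports.
Set Implicit Arguments.
Unset Strict Implicit.
Unset Printing Implicit Defensive.

Local Open Scope ring_scope.
Local Open Scope classical_set_scope.

Definition dotv (R : realType) (d : nat) (u x : 'rV[R]_d) : R :=
  \sum_(i < d) u 0 i * x 0 i.

Definition unit_ball (R : realType) (d : nat) : set 'rV[R]_d :=
  [set x | dotv x x <= 1].

Definition unit_sphere (R : realType) (d : nat) : set 'rV[R]_d :=
  [set x | dotv x x = 1].
Arguments unit_ball : clear implicits.
Arguments unit_sphere : clear implicits.

Definition closed_ball2 (R : realType) (d : nat) (c : 'rV[R]_d) (r : R)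
  : set 'rV[R]_d := [set x | dotv (x - c) (x - c) <= r ^+ 2].

Definition conv_hull (R : realType) (d n : nat) (v : 'I_n -> 'rV[R]_d)
  : set 'rV[R]_d :=
  [set x | exists l : 'I_n -> R,
     [/\ (forall i, 0 <= l i), \sum_(i < n) l i = 1
       & x = \sum_(i < n) l i *: v i]].

Definition affinely_independent (R : realType) (d n : nat)
  (v : 'I_n -> 'rV[R]_d) : Prop :=
  forall l : 'I_n -> R, \sum_(i < n) l i = 0 ->
    \sum_(i < n) l i *: v i = 0 -> forall i, l i = 0.

Definition support_fun (R : realType) (d : nat) (K : set 'rV[R]_d)
  (u : 'rV[R]_d) : R := sup [set dotv u x | x in K].

Definition borelR (R : realType) (d : nat) :=
  g_sigma_algebraType (@open 'rV[R]_d).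

(* mu is the uniform probability measure on S^{d-1}: the (unique)
   probability measure concentrated on the sphere that is invariant
   under all orthogonal transformations. *)
Definition uniform_sphere_measure (R : realType) (d : nat)
  (mu : {measure set (borelR R d) -> \bar R}) : Prop :=
  [/\ mu setT = 1%E,
      mu (~` (unit_sphere R d : set (borelR R d))) = 0%E
    & forall Q : 'M[R]_d, Q *m Q^T = 1%:M ->
        forall A : set (borelR R d), measurable A ->
          mu ((fun x : borelR R d => (x *m Q : borelR R d)) @^-1` A) = mu A].

Definition mean_width (R : realType) (d : nat)
  (mu : {measure set (borelR R d) -> \bar R}) (K : set 'rV[R]_d) : \bar R :=
  (2%:E * \int[mu]_(u in (unit_sphere R d : set (borelR R d)))
             (support_fun K u)%:E)%E.

(* Main.v *)
Require Import Defs.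
From HB Require Import structures.
From mathcomp Require Import all_boot all_order all_algebra.
From mathcomp Require Import all_classical all_reals all_analysis.
From mathcomp Require Import ring lra.
Import Order.TTheory GRing.Theory Num.Theory.
Import numFieldNormedType.Exports.
Local Open Scope ring_scope.
Local Open Scope classical_set_scope.
Set Implicit Arguments.
Unset Strict Implicit.
Unset Printing Implicit Defensive.

Section dot.
Context {R : realType} {d : nat}.
Implicit Types x y z u : 'rV[R]_d.

Lemma dotvC x y : dotv x y = dotv y x.
Proof. by rewrite /dotv; apply: eq_bigr => i _; rewrite mulrC. Qed.

Lemma dotvDr x y z : dotv x (y + z) = dotv x y + dotv x z.
Proof. by rewrite /dotv -big_split; apply: eq_bigr => i _; rewrite mxE mulrDr. Qed.

Lemma dotvZr a x y : dotv x (a *: y) = a * dotv x y.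
Proof. by rewrite /dotv mulr_sumr; apply: eq_bigr => i _; rewrite mxE mulrCA. Qed.

Lemma dotvNr x y : dotv x (- y) = - dotv x y.
Proof. by rewrite -scaleN1r dotvZr mulN1r. Qed.

Lemma dotvBr x y z : dotv x (y - z) = dotv x y - dotv x z.
Proof. by rewrite dotvDr dotvNr. Qed.

Lemma dotv0r x : dotv x 0 = 0.
Proof. by rewrite /dotv big1 // => i _; rewrite mxE mulr0. Qed.

Lemma dotvDl x y z : dotv (y + z) x = dotv y x + dotv z x.
Proof. by rewrite !(dotvC _ x) dotvDr. Qed.
Lemma dotvZl a x y : dotv (a *: y) x = a * dotv y x.
Proof. by rewrite !(dotvC _ x) dotvZr. Qed.
Lemma dotvNl x y : dotv (- y) x = - dotv y x.
Proof. by rewrite !(dotvC _ x) dotvNr. Qed.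
Lemma dotvBl x y z : dotv (y - z) x = dotv y x - dotv z x.
Proof. by rewrite !(dotvC _ x) dotvBr. Qed.
Lemma dotv0l x : dotv 0 x = 0.
Proof. by rewrite dotvC dotv0r. Qed.

Lemma dotv_sumr (n : nat) x (l : 'I_n -> R) (w : 'I_n -> 'rV[R]_d) :
  dotv x (\sum_(i < n) l i *: w i) = \sum_(i < n) l i * dotv x (w i).
Proof.
elim/big_rec2: _ => [|i y1 y2 _ <-]; first by rewrite dotv0r.
by rewrite dotvDr dotvZr.
Qed.

Lemma dotv_ge0 x : 0 <= dotv x x.
Proof. by apply: sumr_ge0 => i _; rewrite -expr2 sqr_ge0. Qed.

Lemma dotv_coord x i : (x 0 i) ^+ 2 <= dotv x x.
Proof.
rewrite /dotv (bigD1 i) //= -expr2 lerDl.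
by apply: sumr_ge0 => j _; rewrite -expr2 sqr_ge0.
Qed.

Lemma dotv_mx x y : dotv x y = (x *m y^T) 0 0.
Proof. by rewrite mxE /dotv; apply: eq_bigr => i _; rewrite mxE. Qed.

Lemma dotv_orth (Q : 'M[R]_d) x y : Q *m Q^T = 1%:M ->
  dotv (x *m Q) (y *m Q) = dotv x y.
Proof.
move=> hQ; rewrite !dotv_mx trmx_mul mulmxA -(mulmxA x) hQ mulmx1 //.
Qed.

Lemma dotv_amgm e x y : 2 * e * dotv x y <= e ^+ 2 * dotv x x + dotv y y.
Proof.
have := dotv_ge0 (e *: x - y).
rewrite dotvBl !dotvBr !dotvZl !dotvZr (dotvC y x).
move=> h; rewrite -subr_ge0; apply: le_trans h _; rewrite le_eqVlt; apply/orP; left; apply/eqP; ring.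
Qed.

End dot.
Section hull.
Context {R : realType} {d : nat}.

Definition hm (n : nat) (w : 'I_n.+1 -> 'rV[R]_d) (u : 'rV[R]_d) : R :=
  \big[Order.max/dotv u (w ord0)]_(i < n.+1) dotv u (w i).

Arguments hm {n}.

Lemma hm_ge n (w : 'I_n.+1 -> 'rV[R]_d) u i : dotv u (w i) <= hm w u.
Proof.
rewrite /hm; have : i \in index_enum 'I_n.+1 by rewrite mem_index_enum.
elim: (index_enum _) => [//|j s IH]; rewrite inE big_cons.
case/orP => [/eqP ->|/IH h]; first by rewrite le_max lexx.
by rewrite le_max h orbT.
Qed.

Lemma hm_att n (w : 'I_n.+1 -> 'rV[R]_d) u : exists i, hm w u = dotv u (w i).
Proof.
rewrite /hm; elim/big_rec: _ => [|i x _ [j ->]]; first by exists ord0.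
by case: (leP (dotv u (w i)) (dotv u (w j))) => h; [exists j | exists i].
Qed.

Lemma conv_vertex n (w : 'I_n -> 'rV[R]_d) i : conv_hull w (w i).
Proof.
exists (fun j => if j == i then 1 else 0); split.
- by move=> j; case: ifP.
- by rewrite (bigD1 i) //= eqxx big1 ?addr0 // => j /negbTE ->.
- rewrite (bigD1 i) //= eqxx scale1r big1 ?addr0 // => j /negbTE ->.
  by rewrite scale0r.
Qed.

Lemma dotv_hull n (w : 'I_n -> 'rV[R]_d) u x M :
  conv_hull w x -> (forall i, dotv u (w i) <= M) -> dotv u x <= M.
Proof.
case=> l [l0 l1 ->] hM; rewrite dotv_sumr.
apply: (@le_trans _ _ (\sum_(i < n) l i * M)).
  by apply: ler_sum => i _; apply: ler_wpM2l.
by rewrite -mulr_suml l1 mul1r.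
Qed.

Lemma support_hm n (w : 'I_n.+1 -> 'rV[R]_d) u :
  support_fun (conv_hull w) u = hm w u.
Proof.
apply/le_anti/andP; split.
  apply: ge_sup; first by exists (dotv u (w ord0)), (w ord0) => //; exact: conv_vertex.
  move=> _ [x hx <-]; apply: dotv_hull hx _ => i; exact: hm_ge.
have [i ->] := hm_att w u.
apply: ub_le_sup; last by exists (w i) => //; exact: conv_vertex.
exists (hm w u) => _ [x hx <-]; apply: dotv_hull hx _ => j; exact: hm_ge.
Qed.

Lemma jensen_dotv n (l : 'I_n -> R) (y : 'I_n -> 'rV[R]_d) :
  (forall i, 0 <= l i) -> \sum_(i < n) l i = 1 ->
  dotv (\sum_(i < n) l i *: y i) (\sum_(i < n) l i *: y i)
  <= \sum_(i < n) l i * dotv (y i) (y i).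
Proof.
move=> l0 l1; set m := \sum_(i < n) l i *: y i.
have h : 0 <= \sum_(i < n) l i * dotv (y i - m) (y i - m).
  by apply: sumr_ge0 => i _; apply: mulr_ge0 => //; exact: dotv_ge0.
have e : \sum_(i < n) l i * dotv (y i - m) (y i - m) =
   \sum_(i < n) l i * dotv (y i) (y i) - dotv m m.
  have e1 : \sum_(i < n) l i * dotv (y i - m) (y i - m) =
    \sum_(i < n) l i * dotv (y i) (y i) - 2 * \sum_(i < n) l i * dotv m (y i)
    + (\sum_(i < n) l i) * dotv m m.
    rewrite mulr_sumr mulr_suml -sumrB -big_split /=; apply: eq_bigr => i _.
    rewrite dotvBl !dotvBr (dotvC (y i) m); ring.
  by rewrite e1 -dotv_sumr l1 mul1r; ring.
by rewrite -subr_ge0 -e.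
Qed.

Lemma hull_ball2 n (w : 'I_n -> 'rV[R]_d) c r :
  (forall i, dotv (w i - c) (w i - c) <= r ^+ 2) ->
  conv_hull w `<=` closed_ball2 c r.
Proof.
move=> hw x [l [l0 l1 ->]]; rewrite /closed_ball2 /=.
have -> : \sum_(i < n) l i *: w i - c = \sum_(i < n) l i *: (w i - c).
  rewrite [RHS](eq_bigr (fun i => l i *: w i - l i *: c)); last by move=> i _; rewrite scalerBr.
  by rewrite sumrB -scaler_suml l1 scale1r.
apply: le_trans (jensen_dotv _ l0 l1) _.
apply: (@le_trans _ _ (\sum_(i < n) l i * r ^+ 2)).
  by apply: ler_sum => i _; apply: ler_wpM2l.
by rewrite -mulr_suml l1 mul1r.
Qed.

Lemma hull_ball n (w : 'I_n -> 'rV[R]_d) :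
  (forall i, dotv (w i) (w i) <= 1) -> conv_hull w `<=` unit_ball R d.
Proof.
move=> hw x hx.
have := @hull_ball2 n w 0 1 _ x hx; rewrite /closed_ball2 /= subr0 expr1n; apply.
by move=> i; rewrite subr0 ?expr1n; apply: hw.
Qed.

End hull.
Section linalg.
Context {R : realType} {d : nat}.

Lemma vertex_exposed (v : 'I_d.+1 -> 'rV[R]_d) k : affinely_independent v ->
  exists a : 'rV[R]_d, forall i, i != k -> dotv a (v i) + 1 = dotv a (v k).
Proof.
move=> hv.
pose M : 'M[R]_d := \matrix_(j < d, c < d) (v (lift k j) - v k) 0 c.
have rowM j : row j M = v (lift k j) - v k.
  by apply/rowP => c; rewrite !mxE.
have inj : forall l : 'rV[R]_d, l *m M = 0 -> l = 0.
  move=> l hl.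
  pose L i := if unlift k i is Some j then l 0 j else - \sum_(j < d) l 0 j.
  have Lk : L k = - \sum_(j < d) l 0 j by rewrite /L unlift_none.
  have Ll j : L (lift k j) = l 0 j by rewrite /L liftK.
  have h1 : \sum_(i < d.+1) L i = 0.
    by rewrite (bigD1_ord k) //= Lk (eq_bigr _ (fun j _ => Ll j)) addNr.
  have h2 : \sum_(i < d.+1) L i *: v i = 0.
    rewrite (bigD1_ord k) //= Lk (eq_bigr _ (fun j _ => congr1 (fun t => t *: v (lift k j)) (Ll j))).
    transitivity (l *m M); last exact: hl.
    rewrite mulmx_sum_row.
    rewrite [RHS](eq_bigr (fun j => l 0 j *: v (lift k j) - l 0 j *: v k)); last first.
      by move=> j _; rewrite rowM scalerBr.
    by rewrite sumrB -scaler_suml scaleNr addrC.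
  apply/rowP => j; rewrite mxE -Ll; exact: hv h1 h2 _.
have /row_freeP [B hB] := inj_row_free inj.
exists (B *m const_mx (-1))^T => i; case: (unliftP k i) => [j ->|->]; last by rewrite eqxx.
move=> _.
set a := (B *m const_mx (-1))^T.
have : dotv a (v (lift k j) - v k) = -1.
  by rewrite -[v (lift k j) - v k](rowM j) dotvC dotv_mx trmxK -row_mul mulmxA hB mul1mx !mxE.
rewrite dotvBr => h; lra.
Qed.

End linalg.
Section topo.
Context {R : realType} {d : nat}.
Local Notation V := 'rV[R]_d.

Lemma cont_sum (n : nat) (F : 'I_n -> V -> R) :
  (forall i, continuous (F i)) -> continuous (fun x => \sum_(i < n) F i x).
Proof.
move=> hF; suff : forall s, continuous (fun x => \sum_(i <- s) F i x) by apply.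
elim=> [|i s IH].
  have -> : (fun x => \sum_(i <- [::]) F i x) = fun=> 0.
    by apply: funext => x; rewrite big_nil.
  exact: cst_continuous.
have -> : (fun x => \sum_(j <- i :: s) F j x) = F i + (fun x => \sum_(j <- s) F j x).
  by apply: funext => x; rewrite big_cons.
by move=> x; apply: continuousD; [exact: hF | exact: IH].
Qed.

Lemma cont_dotv (y : V) : continuous (fun x : V => dotv x y).
Proof.
rewrite /dotv; apply: cont_sum => i x.
apply: continuousM; [exact: coord_continuous | exact: cst_continuous].
Qed.

Lemma cont_dist (b : V) : continuous (fun x : V => dotv (x - b) (x - b)).
Proof.
have -> : (fun x : V => dotv (x - b) (x - b)) =
    (fun x => \sum_(i < d) (fun x : V => (x 0 i - b 0 i)) x * (fun x : V => (x 0 i - b 0 i)) x).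
  by apply: funext => x; rewrite /dotv; apply: eq_bigr => i _; rewrite !mxE.
apply: cont_sum => i x.
have hc : {for x, continuous (fun x : V => (x 0 i - b 0 i))}.
  by apply: continuousB; [exact: coord_continuous | exact: cst_continuous].
exact: (continuousM hc hc).
Qed.

Lemma cont_meas (f : V -> R) : continuous f ->
  measurable_fun setT (f : borelR R d -> R).
Proof.
move=> cf; apply: (measurability _ (measurable_realfun.RGenOpens.measurableE R)).
move=> _ [_ [a [b ->]] <-]; apply: measurableI => //.
apply: sub_sigma_algebra; move/continuousP: cf; apply.
exact: interval_open.
Qed.

Lemma open_meas (A : set V) : open A -> measurable (A : set (borelR R d)).
Proof. by move=> oA; apply: sub_sigma_algebra. Qed.

Lemma closed_meas (A : set V) : closed A -> measurable (A : set (borelR R d)).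
Proof.
move=> cA; rewrite -(setCK A); apply: measurableC; apply: open_meas.
exact: closed_openC.
Qed.

Lemma sphere_closed : closed (unit_sphere R d).
Proof.
have -> : unit_sphere R d = (fun x : V => dotv (x - 0) (x - 0)) @^-1` [set 1].
  by apply: funext => x; rewrite /unit_sphere /= subr0.
apply: preimage_closed; last exact: closed_eq.
by move=> x _; apply: cont_dist.
Qed.

Definition cap (a : V) (e : R) : set V :=
  [set x | unit_sphere R d x /\ dotv (x - a) (x - a) < e].

Lemma cap_meas a e : measurable (cap a e : set (borelR R d)).
Proof.
have -> : cap a e = unit_sphere R d `&` ((fun x : V => dotv (x - a) (x - a)) @^-1` [set y | y < e]).
  by apply: funext => x.
apply: measurableI; first exact: (closed_meas sphere_closed).
apply: open_meas; move/continuousP: (@cont_dist a); apply; exact: open_lt.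
Qed.

Lemma sphere_compact : compact (unit_sphere R d).
Proof.
have hc := rV_compact (fun _ : 'I_d => @segment_compact R (-1) 1).
apply: (subclosed_compact sphere_closed hc).
move=> x hx i /=; have := dotv_coord x i; rewrite hx => h.
rewrite in_itv /=; apply/andP; split; nra.
Qed.

Lemma dotv_eq0 (x : V) : dotv x x = 0 -> x = 0.
Proof.
move=> h; apply/rowP => i; rewrite mxE; have := dotv_coord x i; rewrite h => h2.
have : x 0 i ^+ 2 = 0 by apply/le_anti; rewrite h2 sqr_ge0.
by move/eqP; rewrite sqrf_eq0 => /eqP.
Qed.

Lemma mx11_dotv (x y : V) : x *m y^T = (dotv x y)%:M.
Proof.
apply/matrixP => i j; rewrite (ord1 i) (ord1 j) dotv_mx.
by rewrite [in RHS]mxE eqxx mulr1n.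
Qed.

Lemma householder (a b : V) : unit_sphere R d a -> unit_sphere R d b ->
  exists Q : 'M[R]_d, Q *m Q^T = 1%:M /\ b *m Q = a.
Proof.
move=> ha hb; have [->|nab] := eqVneq b a.
  by exists 1%:M; split; rewrite ?trmx1 mulmx1.
pose w := b - a; pose c := 2 / dotv w w; pose W := w^T *m w.
have ww0 : dotv w w != 0.
  apply/eqP => /dotv_eq0 /eqP; rewrite subr_eq0; exact/negP.
have WT : W^T = W by rewrite /W trmx_mul trmxK.
have WW : W *m W = dotv w w *: W.
  by rewrite /W mulmxA -(mulmxA w^T) mx11_dotv mul_mx_scalar scalemxAl.
exists (1%:M - c *: W); split.
  have QT : (1%:M - c *: W)^T = 1%:M - c *: W.
    by rewrite raddfB /= trmx1 linearZ /= WT.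
  rewrite QT.
  rewrite mulmxBl !mulmxBr mul1mx mulmx1 -!scalemxAl -!scalemxAr WW.
  rewrite mul1mx !scalerA.
  have -> : c * c * dotv w w = 2 * c.
    by rewrite /c; field.
  rewrite -scalerBl -addrA -opprD -scalerDl.
  have -> : c + (c - 2 * c) = 0 by ring.
  by rewrite scale0r subr0.
rewrite mulmxBr mulmx1 -scalemxAr /W mulmxA mx11_dotv mul_scalar_mx scalerA.
have hbw : dotv b w = 1 - dotv a b.
  by rewrite /w dotvBr hb (dotvC b a).
have hww : dotv w w = 2 * (1 - dotv a b).
  rewrite /w dotvBl !dotvBr hb ha (dotvC b a); ring.
have -> : c * dotv b w = 1.
  rewrite /c hbw hww; field.
  by move: ww0; rewrite hww mulf_eq0 negb_or => /andP[].
by rewrite scale1r /w opprB addrC addrNK.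
Qed.

Lemma preimage_cap (Q : 'M[R]_d) (a b : V) e : Q *m Q^T = 1%:M -> b *m Q = a ->
  (fun x : V => x *m Q) @^-1` cap a e = cap b e.
Proof.
move=> hQ hb; apply: funext => x /=; rewrite /cap /unit_sphere /=.
by rewrite -hb -mulmxBl !dotv_orth.
Qed.

End topo.
Section measpos.
Context {R : realType} {d : nat} (mu : {measure set (borelR R d) -> \bar R}).
Hypothesis hmu : uniform_sphere_measure mu.

Lemma sphere_meas : measurable (unit_sphere R d : set (borelR R d)).
Proof. exact: (closed_meas sphere_closed). Qed.

Lemma mu_sphere : mu (unit_sphere R d) = 1%E.
Proof.
case: hmu => h1 h0 _.
have : mu setT = (mu (unit_sphere R d) + mu (~` (unit_sphere R d : set (borelR R d))))%E.
  rewrite -measureU //; [by rewrite setUv | exact: sphere_meas | exact: measurableC sphere_meas | by rewrite setICr].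
by rewrite h1 h0 adde0.
Qed.

Lemma cap_pos a e : unit_sphere R d a -> 0 < e -> (0 < mu (cap a e))%E.
Proof.
move=> ha he; rewrite lt0e measure_ge0 andbT; apply/negP => /eqP h0.
have hb : forall b, unit_sphere R d b -> mu (cap b e) = 0%E.
  move=> b hb; have [Q [hQ hbQ]] := householder ha hb.
  rewrite -(preimage_cap e hQ hbQ).
  by case: hmu => _ _ /(_ Q hQ (cap a e) (cap_meas a e)) ->.
have dp : 0 < d%:R + 1 :> R by rewrite ltr_wpDl.
pose eps := Num.sqrt (e / (d%:R + 1)).
have eps0 : 0 < eps by rewrite sqrtr_gt0 divr_gt0.
have eps2 : eps ^+ 2 = e / (d%:R + 1) by rewrite sqr_sqrtr // ltW // divr_gt0.
have cc : cover_compact (unit_sphere R d) by rewrite -compact_cover; exact: sphere_compact.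
have hcov : unit_sphere R d `<=` cover (unit_sphere R d) (fun b => ball b eps).
  by move=> x hx; exists x => //; exact: ballxx.
have [D' sD' cov] := cc _ (unit_sphere R d) (fun b => ball b eps) (fun b _ => ball_open b eps) hcov.
move: cov; set D2 := (X in cover X _) => cov.
have : (mu (unit_sphere R d) <= \sum_(b \in D2) mu (cap b e))%E.
  apply: content_sub_fsum => //; [exact: finite_fset | by move=> b _; exact: cap_meas | exact: sphere_meas |].
  move=> x hx; have [b hbD hxb] := cov x hx; exists b => //; split => //.
  have hco : forall i, (x - b) 0 i * (x - b) 0 i <= eps ^+ 2.
    move=> i; case: hxb => _ /(_ 0 i); rewrite /ball /= => /ltr_normlP [h1 h2].
    rewrite !mxE; nra.
  apply: (@le_lt_trans _ _ (\sum_(i < d) eps ^+ 2)); first exact: ler_sum.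
  rewrite sumr_const card_ord -mulr_natr eps2.
  have -> : e / (d%:R + 1) * d%:R = e - e / (d%:R + 1) by field; rewrite gt_eqF.
  by rewrite ltrBlDr ltrDl divr_gt0.
rewrite fsbig1 ?mu_sphere ?lee_fin ?ler10 //.
by move=> b /sD' hbs; apply: hb; move: hbs; rewrite inE.
Qed.

End measpos.
Section integrals.
Context {R : realType} {d : nat} (mu : {measure set (borelR R d) -> \bar R}).
Hypothesis hmu : uniform_sphere_measure mu.
Local Notation V := 'rV[R]_d.
Local Notation S := (unit_sphere R d : set (borelR R d)).

Definition okf (f : V -> R) :=
  measurable_fun setT (f : borelR R d -> R) /\
  exists M, forall u, unit_sphere R d u -> `|f u| <= M.

Lemma okf_int f : okf f -> mu.-integrable S (EFin \o f).
Proof.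
case=> mf [M hM]; apply: measurable_bounded_integrable.
- exact: sphere_meas.
- by rewrite (mu_sphere hmu) ltry.
- exact: measurable_funTS.
exists M; split; first exact: num_real.
by move=> N hN x hx; apply: le_trans (hM x hx) (ltW hN).
Qed.

Lemma okfB f g : okf f -> okf g -> okf (fun u => f u - g u).
Proof.
case=> mf [M1 h1] [mg [M2 h2]]; split; first exact: measurable_realfun.measurable_funB.
exists (M1 + M2) => u hu; apply: le_trans (ler_normB _ _) _.
exact: lerD (h1 u hu) (h2 u hu).
Qed.

Lemma okfD f g : okf f -> okf g -> okf (fun u => f u + g u).
Proof.
case=> mf [M1 h1] [mg [M2 h2]]; split; first exact: measurable_realfun.measurable_funD.
exists (M1 + M2) => u hu; apply: le_trans (ler_normD _ _) _.
exact: lerD (h1 u hu) (h2 u hu).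
Qed.

Lemma okfZ k f : okf f -> okf (fun u => k * f u).
Proof.
case=> mf [M h]; split.
  by apply: measurable_realfun.measurable_funM => //; exact: measurable_cst.
exists (`|k| * M) => u hu; rewrite normrM; exact: (ler_wpM2l (normr_ge0 k) (h u hu)).
Qed.

Lemma dotv_bound (u y : V) : unit_sphere R d u -> `|dotv u y| <= (1 + dotv y y) / 2.
Proof.
move=> hu; have h1 := dotv_amgm 1 u y; have h2 := dotv_amgm (-1) u y.
rewrite hu in h1 h2; rewrite ler_norml; apply/andP; split; nra.
Qed.

Lemma okf_dot (y : V) : okf (fun u => dotv u y).
Proof.
split; first by apply: cont_meas; exact: cont_dotv.
by exists ((1 + dotv y y) / 2) => u hu; exact: dotv_bound.
Qed.

Lemma okf_hm (n : nat) (w : 'I_n.+1 -> V) : okf (hm w).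
Proof.
split.
  rewrite /hm; suff : forall s, measurable_fun setT
      ((fun u => \big[Order.max/dotv u (w ord0)]_(i <- s) dotv u (w i)) : borelR R d -> R).
    by apply.
  elim=> [|i s IH].
    have -> : (fun u => \big[Order.max/dotv u (w ord0)]_(i <- [::]) dotv u (w i)) =
      (fun u => dotv u (w ord0)) by apply: funext => u; rewrite big_nil.
    by apply: cont_meas; exact: cont_dotv.
  have -> : (fun u => \big[Order.max/dotv u (w ord0)]_(j <- i :: s) dotv u (w j)) =
      ((fun u => dotv u (w i)) \max (fun u => \big[Order.max/dotv u (w ord0)]_(j <- s) dotv u (w j)))
    by apply: funext => u; rewrite big_cons.
  apply: measurable_realfun.measurable_maxr => //; by apply: cont_meas; exact: cont_dotv.
exists (\sum_(i < n.+1) (1 + dotv (w i) (w i)) / 2) => u hu.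
have [i ->] := hm_att w u; apply: le_trans (dotv_bound _ hu) _.
rewrite (bigD1 i) //= lerDl; apply: sumr_ge0 => j _.
by apply: divr_ge0 => //; apply: addr_ge0 => //; exact: dotv_ge0.
Qed.

Lemma int_fin f : okf f -> (\int[mu]_(u in S) (f u)%:E)%E \is a fin_num.
Proof. by move=> hf; apply: integrable_fin_num; [exact: sphere_meas | exact: okf_int]. Qed.

Lemma int_B f g : okf f -> okf g ->
  (\int[mu]_(u in S) (f u - g u)%:E = \int[mu]_(u in S) (f u)%:E - \int[mu]_(u in S) (g u)%:E)%E.
Proof.
move=> hf hg; rewrite -integralB_EFin; [|exact: sphere_meas|exact: okf_int|exact: okf_int].
by apply: eq_integral => u _; rewrite EFinB.
Qed.

Lemma int_D f g : okf f -> okf g ->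
  (\int[mu]_(u in S) (f u + g u)%:E = \int[mu]_(u in S) (f u)%:E + \int[mu]_(u in S) (g u)%:E)%E.
Proof.
move=> hf hg; rewrite -integralD_EFin; [|exact: sphere_meas|exact: okf_int|exact: okf_int].
by apply: eq_integral => u _; rewrite EFinD.
Qed.

Lemma int_Z k f : okf f ->
  (\int[mu]_(u in S) (k * f u)%:E = k%:E * \int[mu]_(u in S) (f u)%:E)%E.
Proof.
move=> hf; rewrite -integralZl; [|exact: sphere_meas|exact: okf_int].
by apply: eq_integral => u _; rewrite EFinM.
Qed.

End integrals.
Section integrals2.
Context {R : realType} {d : nat} (mu : {measure set (borelR R d) -> \bar R}).
Hypothesis hmu : uniform_sphere_measure mu.
Local Notation V := 'rV[R]_d.
Local Notation S := (unit_sphere R d : set (borelR R d)).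

Lemma neg_meas : measurable_fun setT ((fun x : V => - x) : borelR R d -> borelR R d).
Proof.
apply: (@measurability _ _ (borelR R d) (borelR R d) setT _ open) => //.
move=> _ [A oA <-]; apply: measurableI => //; apply: sub_sigma_algebra.
move: A oA; apply/continuousP => x; exact: continuousN.
Qed.

Lemma okf_neg (f : V -> R) : okf f -> okf (fun u => f (- u)).
Proof.
case=> mf [M hM]; split.
  exact: (measurableT_comp mf neg_meas).
exists M => u hu; apply: hM; rewrite /unit_sphere /= dotvNl dotvNr opprK; exact: hu.
Qed.

Lemma int_sym (f : V -> R) : okf f ->
  (\int[mu]_(u in S) (f (- u))%:E = \int[mu]_(u in S) (f u)%:E)%E.
Proof.
move=> hf; pose phi := (fun x : V => - x) : borelR R d -> borelR R d.
have hQ : (-1%:M : 'M[R]_d) *m (-1%:M)^T = 1%:M.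
  by rewrite raddfN /= trmx1 mulmxN mulNmx mulmx1 opprK.
have phiE : (fun x : borelR R d => (x *m (-1%:M) : borelR R d)) = phi.
  by apply: funext => x; rewrite /phi mulmxN mulmx1.
have pre : phi @^-1` S = S.
  by apply: funext => x; rewrite /phi /unit_sphere /= dotvNl dotvNr opprK.
have mfE := proj2 (measurable_realfun.measurable_EFinP setT (f : borelR R d -> R)) (proj1 hf).
rewrite [RHS](eq_measure_integral (pushforward mu phi)); last first.
  move=> ? A mA _; case: hmu => _ _ /(_ _ hQ A mA); rewrite phiE => h.
  rewrite /pushforward /=; exact: esym h.
move=> mphi; rewrite (integral_pushforward mphi mfE); last exact: sphere_meas.
  by rewrite pre.
  rewrite pre; exact: (okf_int hmu (okf_neg hf)).
exact: neg_meas.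
Qed.

Lemma int_dot0 (y : V) : (\int[mu]_(u in S) (dotv u y)%:E = 0)%E.
Proof.
have h := int_sym (okf_dot y).
have h2 : (\int[mu]_(u in S) (dotv (- u) y)%:E = (-1)%:E * \int[mu]_(u in S) (dotv u y)%:E)%E.
  rewrite -(int_Z hmu _ (okf_dot y)); apply: eq_integral => u _.
  by rewrite dotvNl mulN1r.
have hf := int_fin hmu (okf_dot y).
move: h; rewrite h2; move: hf.
case: (\int[mu]_(u in S) (dotv u y)%:E)%E => // r _ /eqP.
rewrite -EFinM eqe => /eqP h; congr EFin; lra.
Qed.

Lemma int_pos (g : V -> R) (a : V) (c e : R) : okf g -> (forall u, unit_sphere R d u -> 0 <= g u) ->
  unit_sphere R d a -> 0 < c -> 0 < e ->
  (forall u, cap a e u -> c <= g u) ->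
  (0 < \int[mu]_(u in S) (g u)%:E)%E.
Proof.
move=> hg g0 ha c0 e0 hc.
have mS := sphere_meas (R := R) (d := d).
have hcap := cap_pos hmu ha e0.
apply: (@lt_le_trans _ _ (c%:E * mu (cap a e))%E).
  by rewrite mule_gt0 // lte_fin.
have -> : (c%:E * mu (cap a e) = \int[mu]_(u in S) (c * \1_(cap a e) u)%:E)%E.
  rewrite (eq_integral (fun u : borelR R d => c%:E * (\1_(cap a e) u)%:E)%E); last by move=> u _; rewrite EFinM.
  rewrite ge0_integralZl_EFin //.
  - rewrite integral_indic //; last exact: cap_meas.
    by rewrite setIidl //; move=> u [].
  - apply/measurable_realfun.measurable_EFinP; apply: measurable_funTS.
    exact: (measurable_realfun.measurable_indic (cap_meas a e)).
  - exact: ltW.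
apply: ge0_le_integral => //.
- by move=> u _; rewrite lee_fin; apply: mulr_ge0; [exact: ltW | rewrite indicE; case: (u \in cap a e)].
- apply/measurable_realfun.measurable_EFinP; apply: measurable_realfun.measurable_funM; first exact: measurable_cst.
  apply: measurable_funTS; exact: (measurable_realfun.measurable_indic (cap_meas a e)).
- by apply/measurable_realfun.measurable_EFinP; apply: measurable_funTS; case: hg.
move=> u hu; rewrite lee_fin indicE; case: (boolP (u \in cap a e)) => hin.
  rewrite mulr1; apply: hc; move: hin; rewrite inE; exact.
by rewrite mulr0; apply: g0.
Qed.

End integrals2.
Lemma sum_ifeq (V : zmodType) (n : nat) (k : 'I_n) (x : V) :
  \sum_(i < n) (if i == k then x else 0) = x.
Proof. by rewrite (bigD1 k) //= eqxx big1 ?addr0 // => i /negbTE ->. Qed.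

Section geom.
Context {R : realType} {d : nat}.
Local Notation V := 'rV[R]_d.

Lemma dist_le4 (x y : V) : dotv x x <= 1 -> dotv y y <= 1 -> dotv (x - y) (x - y) <= 4.
Proof.
move=> hx hy; have h := dotv_amgm (-1) x y.
rewrite dotvBl !dotvBr (dotvC y x); nra.
Qed.

Lemma small_dot (z y : V) (g : R) : 0 < g -> dotv z z <= g ^+ 2 / 16 -> dotv y y <= 4 ->
  `|dotv z y| <= g / 2.
Proof.
move=> g0 hz hy; set t := 8 / g.
have t0 : 0 < t by rewrite divr_gt0.
have tg : t * g = 8 by rewrite /t mulfVK // gt_eqF.
have tA : t ^+ 2 * dotv z z <= 4.
  apply: (@le_trans _ _ (t ^+ 2 * (g ^+ 2 / 16))); first by rewrite ler_wpM2l // sqr_ge0.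
  rewrite mulrA -exprMn tg; lra.
have h1 := dotv_amgm t z y; have h2 := dotv_amgm (- t) z y.
rewrite sqrrN in h2.
rewrite ler_norml; apply/andP; split; nra.
Qed.

Lemma cap_est (a u y : V) (g : R) : 0 < g -> cap a (g ^+ 2 / 16) u -> dotv y y <= 4 ->
  dotv a y - g / 2 <= dotv u y.
Proof.
move=> g0 [_ hu] hy; have := small_dot g0 (ltW hu) hy.
have -> : dotv u y = dotv a y + dotv (u - a) y by rewrite dotvBl; ring.
rewrite ler_norml => /andP[h1 h2]; lra.
Qed.

End geom.

Lemma lift_neq (n : nat) (k : 'I_n.+1) (j : 'I_n) : lift k j != k.
Proof. by rewrite eq_sym neq_lift. Qed.
Section main.
Context {R : realType} {d : nat} (mu : {measure set (borelR R d) -> \bar R})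
  (v : 'I_d.+1 -> 'rV[R]_d).
Hypothesis hd : (0 < d)%N.
Hypothesis hmu : uniform_sphere_measure mu.
Hypothesis hv : affinely_independent v.
Hypothesis hin : conv_hull v `<=` unit_ball R d.
Hypothesis hmax : forall w : 'I_d.+1 -> 'rV[R]_d,
      affinely_independent w -> conv_hull w `<=` unit_ball R d ->
      (mean_width mu (conv_hull w) <= mean_width mu (conv_hull v))%E.
Local Notation V := 'rV[R]_d.
Local Notation S := (unit_sphere R d : set (borelR R d)).

Definition Wv (w : 'I_d.+1 -> V) : R := fine (\int[mu]_(u in S) (hm w u)%:E)%E.

Lemma WvE w : (\int[mu]_(u in S) (hm w u)%:E)%E = (Wv w)%:E.
Proof. rewrite /Wv fineK //. exact: (int_fin hmu (okf_hm w)). Qed.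

Lemma hmax' w : affinely_independent w -> (forall i, dotv (w i) (w i) <= 1) ->
  Wv w <= Wv v.
Proof.
move=> hw hwb; have := hmax hw (hull_ball hwb).
rewrite /mean_width.
have e : forall w', (\int[mu]_(u in S) (support_fun (conv_hull w') u)%:E)%E = (Wv w')%:E.
  move=> w'; rewrite -WvE; apply: eq_integral => u _; by rewrite support_hm.
rewrite !e -!EFinM lee_fin => h; nra.
Qed.

Lemma hvb i : dotv (v i) (v i) <= 1.
Proof. exact: (hin (conv_vertex v i)). Qed.

Let j0 : 'I_d := Ordinal hd.

Lemma exposed k : exists a : V, exists g : R, [/\ unit_sphere R d a, 0 < g &
  forall i, i != k -> dotv a (v i) + g = dotv a (v k)].
Proof.
have [a0 ha0] := vertex_exposed k hv.
have aa0 : 0 < dotv a0 a0.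
  rewrite lt_neqAle dotv_ge0 andbT; apply/negP => /eqP /esym /dotv_eq0 a00.
  have := ha0 (lift k j0) (lift_neq k j0); rewrite a00 !dotv0l add0r => /eqP.
  by rewrite oner_eq0.
set s := Num.sqrt (dotv a0 a0).
have s0 : 0 < s by rewrite sqrtr_gt0.
exists (s^-1 *: a0), s^-1; split.
- rewrite /unit_sphere /= dotvZl dotvZr mulrA -expr2 exprVn sqr_sqrtr ?ltW //.
  by rewrite mulVf // gt_eqF.
- by rewrite invr_gt0.
- move=> i /ha0 h; rewrite !dotvZl -h; ring.
Qed.

Lemma posW : 0 < Wv v.
Proof.
have [a [g [ha g0 hg]]] := exposed ord0.
set j := lift ord0 j0; have hj : j != ord0 := lift_neq ord0 j0.
pose f u := hm v u + hm v (- u).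
have okf_f : okf f := okfD (okf_hm v) (okf_neg (okf_hm v)).
have : (0 < \int[mu]_(u in S) (f u)%:E)%E.
  apply: (int_pos hmu okf_f (a := a) (c := g / 2) (e := g ^+ 2 / 16)) => //.
  - move=> u _; rewrite /f; have h1 := hm_ge v u j; have h2 := hm_ge v (- u) j.
    rewrite dotvNl in h2; lra.
  - by rewrite divr_gt0.
  - by rewrite divr_gt0 // exprn_gt0.
  - move=> u hu; rewrite /f; have h1 := hm_ge v u ord0; have h2 := hm_ge v (- u) j.
    rewrite dotvNl in h2.
    have := cap_est g0 hu (dist_le4 (hvb ord0) (hvb j)).
    rewrite !dotvBr -(hg j hj); lra.
rewrite /f (int_D hmu (okf_hm v) (okf_neg (okf_hm v))).
rewrite (int_sym hmu (okf_hm v)) WvE -EFinD lte_fin; lra.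
Qed.

Lemma partb k : dotv (v k) (v k) = 1.
Proof.
apply/eqP; rewrite eq_le hvb /=; rewrite leNgt; apply/negP => hq.
set q := dotv (v k) (v k) in hq.
have q0 : 0 <= q := dotv_ge0 _.
have [a [g [ha g0 hg]]] := exposed k.
set j := lift k j0; have hj : j != k := lift_neq k j0.
set t := (1 - q) / 8.
have t0 : 0 < t by rewrite divr_gt0 // subr_gt0.
pose w i := if i == k then v k + t *: (v k - v j) else v i.
have wE i : w i = v i + (if i == k then t *: (v k - v j) else 0).
  by rewrite /w; case: eqP => [->|]; rewrite ?addr0.
have wj : w j = v j by rewrite /w (negbTE hj).
have wk : w k = v k + t *: (v k - v j) by rewrite /w eqxx.
have hw : affinely_independent w.
  move=> l l0 hl.
  pose l' i := l i + (if i == k then l k * t else 0) - (if i == j then l k * t else 0).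
  have hl'0 : \sum_(i < d.+1) l' i = 0.
    have -> : \sum_(i < d.+1) l' i = \sum_(i < d.+1) (l i + (if i == k then l k * t else 0))
       - \sum_(i < d.+1) (if i == j then l k * t else 0) by rewrite -sumrB.
    by rewrite big_split /= !sum_ifeq l0 add0r subrr.
  have hl'1 : \sum_(i < d.+1) l' i *: v i = 0.
    transitivity (\sum_(i < d.+1) l i *: w i); last exact: hl.
    rewrite (eq_bigr (fun i => l i *: v i + (if i == k then (l k * t) *: v k else 0)
         - (if i == j then (l k * t) *: v j else 0))); last first.
      move=> i _; rewrite /l' scalerBl scalerDl.
      by case: eqP => [->|]; case: eqP => [->|] //=; rewrite ?scale0r.
    rewrite sumrB big_split /= !sum_ifeq.
    rewrite [RHS](eq_bigr (fun i => l i *: v i + (if i == k then l k *: (t *: (v k - v j)) else 0)));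
      last by move=> i _; rewrite wE scalerDr; case: eqP => [->|]; rewrite ?scaler0.
    rewrite big_split /= sum_ifeq scalerA scalerBr; by rewrite addrA.
  have h' := hv hl'0 hl'1.
  have lk : l k = 0.
    have := h' k; rewrite /l' eqxx eq_sym (negbTE hj) subr0 => hk.
    have : l k * (1 + t) = 0 by rewrite mulrDr mulr1.
    by move/eqP; rewrite mulf_eq0 (gt_eqF (ltr_wpDr (ltW t0) ltr01)) orbF => /eqP.
  move=> i; have := h' i; rewrite /l' lk mul0r; by case: (i == k); case: (i == j); rewrite ?subr0 ?addr0.
have hwb : forall i, dotv (w i) (w i) <= 1.
  move=> i; rewrite /w; case: eqP => _; last exact: hvb.
  have hC := hvb j; have hB1 := dotv_amgm 1 (v k) (v j); have hB2 := dotv_amgm (-1) (v k) (v j).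
  rewrite !dotvDl !dotvDr !dotvZl !dotvZr !dotvBl !dotvBr (dotvC (v j) (v k)) -/q.
  rewrite -/q in hB1 hB2.
  have ht : t * 8 = 1 - q by rewrite /t mulfVK.
  nra.
have hle : forall u, hm v u <= hm w u.
  move=> u; have [i ->] := hm_att v u.
  have [->|hik] := eqVneq i k; last first.
    by have := hm_ge w u i; rewrite /w (negbTE hik).
  have h1 := hm_ge w u k; have h2 := hm_ge w u j.
  rewrite wk dotvDr dotvZr dotvBr in h1; rewrite wj in h2; nra.
have hcap : forall u, cap a (g ^+ 2 / 16) u -> hm v u + t * (g / 2) <= hm w u.
  move=> u hu.
  have hk : forall i, dotv u (v i) <= dotv u (v k).
    move=> i; have [->//|hik] := eqVneq i k.
    have := cap_est g0 hu (dist_le4 (hvb k) (hvb i)).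
    rewrite !dotvBr -(hg i hik); lra.
  have hj2 := cap_est g0 hu (dist_le4 (hvb k) (hvb j)).
  rewrite !dotvBr -(hg j hj) in hj2.
  have h1 := hm_ge w u k; rewrite wk dotvDr dotvZr dotvBr in h1.
  have [i0 hi0] := hm_att v u; have := hk i0; rewrite -hi0 => h3.
  nra.
have := hmax' hw hwb.
have : (0 < \int[mu]_(u in S) (hm w u - hm v u)%:E)%E.
  apply: (int_pos hmu (okfB (okf_hm w) (okf_hm v)) (a := a) (c := t * (g / 2)) (e := g ^+ 2 / 16)) => //.
  - by move=> u _; rewrite subr_ge0.
  - by rewrite mulr_gt0 // divr_gt0.
  - by rewrite divr_gt0 // exprn_gt0.
  - by move=> u hu; rewrite lerBrDr addrC; apply: hcap.
rewrite (int_B hmu (okf_hm w) (okf_hm v)).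
rewrite !WvE -EFinB lte_fin; lra.
Qed.

Lemma parta (c : V) (r : R) : 0 <= r -> conv_hull v `<=` closed_ball2 c r -> 1 <= r.
Proof.
move=> r0 hcr; rewrite leNgt; apply/negP => r1.
set s := (r + 1) / 2.
have s0 : 0 < s by rewrite /s; lra.
have rs : r <= s by rewrite /s; lra.
have s1 : s < 1 by rewrite /s; lra.
pose w i := s^-1 *: (v i - c).
have hw : affinely_independent w.
  move=> l l0 hl; apply: hv => //.
  have e : \sum_(i < d.+1) l i *: w i = s^-1 *: \sum_(i < d.+1) l i *: v i.
    rewrite (eq_bigr (fun i => s^-1 *: (l i *: v i) - (l i * s^-1) *: c)); last first.
      by move=> i _; rewrite /w !scalerBr !scalerA (mulrC s^-1).
    by rewrite sumrB -scaler_suml -mulr_suml l0 mul0r scale0r subr0 -scaler_sumr.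
  move: hl; rewrite e => /eqP; rewrite scaler_eq0 invr_eq0 (gt_eqF s0) /= => /eqP //.
have hwb : forall i, dotv (w i) (w i) <= 1.
  move=> i; rewrite /w dotvZl dotvZr.
  have hi : dotv (v i - c) (v i - c) <= r ^+ 2 := hcr _ (conv_vertex v i).
  have hs : dotv (v i - c) (v i - c) <= s * s by nra.
  rewrite mulrA -invfM mulrC ler_pdivrMr ?mulr_gt0 // ?mul1r; lra.
have hmw : forall u, hm w u = s^-1 * (hm v u - dotv u c).
  move=> u; have si : 0 <= s^-1 by rewrite invr_ge0 ltW.
  apply/le_anti/andP; split.
  - have [i0 ->] := hm_att w u; rewrite /w dotvZr dotvBr.
    by apply: ler_wpM2l => //; apply: lerB => //; exact: hm_ge.
  - have [i0 ->] := hm_att v u; have := hm_ge w u i0; by rewrite /w dotvZr dotvBr.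
have Wvw : Wv w = s^-1 * Wv v.
  have : (\int[mu]_(u in S) (hm w u)%:E)%E = (s^-1 * Wv v)%:E.
    rewrite (eq_integral (fun u : borelR R d => (s^-1 * (hm v u - dotv u c))%:E)); last by move=> u _; rewrite hmw.
    rewrite (int_Z hmu _ (okfB (okf_hm v) (okf_dot c))) (int_B hmu (okf_hm v) (okf_dot c)).
    by rewrite (int_dot0 hmu) sube0 WvE -EFinM.
  by rewrite WvE => /eqP; rewrite eqe => /eqP.
have := hmax' hw hwb; rewrite Wvw; have := posW.
have si : 1 < s^-1 by rewrite invf_gt1.
nra.
Qed.

Lemma partc u : unit_sphere R d u -> exists i, 0 <= dotv u (v i).
Proof.
move=> hu; have [//|hno] := pselect (exists i, 0 <= dotv u (v i)).
have hneg : forall i, dotv u (v i) < 0.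
  by move=> i; rewrite ltNge; apply/negP => h; apply: hno; exists i.
set t := - hm v u.
have t0 : 0 < t by rewrite /t; have [i ->] := hm_att v u; rewrite oppr_gt0; exact: hneg.
have t1 : t <= 1.
  have [i hi] := hm_att v u; rewrite /t hi.
  have := dotv_bound (v i) hu; have := hvb i; rewrite ler_norml => h /andP[h1 h2]; lra.
have hti : forall i, dotv u (v i) <= - t by move=> i; rewrite /t opprK; exact: hm_ge.
have tt : 0 <= 1 - t ^+ 2 by nra.
set r := Num.sqrt (1 - t ^+ 2).
have r0 : 0 <= r := sqrtr_ge0 _.
have r2 : r ^+ 2 = 1 - t ^+ 2 by rewrite sqr_sqrtr.
have := @parta ((- t) *: u) r r0.
have hb : conv_hull v `<=` closed_ball2 ((- t) *: u) r.
  apply: hull_ball2 => i; rewrite r2 !dotvBl !dotvBr !dotvZl !dotvZr partb hu (dotvC (v i) u).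
  have := hti i; nra.
move/(_ hb) => h1; nra.
Qed.

End main.
Unset Implicit Arguments.

Theorem claim1p2 (R : realType) (d : nat)
  (mu : {measure set (borelR R d) -> \bar R})
  (v : 'I_d.+1 -> 'rV[R]_d) :
  (2 <= d)%N ->
  uniform_sphere_measure mu ->
  affinely_independent v ->
  conv_hull v `<=` unit_ball R d ->
  (forall w : 'I_d.+1 -> 'rV[R]_d,
      affinely_independent w -> conv_hull w `<=` unit_ball R d ->
      (mean_width mu (conv_hull w) <= mean_width mu (conv_hull v))%E) ->
  [/\ (forall (c : 'rV[R]_d) (r : R), 0 <= r ->
          conv_hull v `<=` closed_ball2 c r -> 1 <= r),
      (forall i, unit_sphere R d (v i))
    & (forall u, unit_sphere R d u -> exists i, 0 <= dotv u (v i))].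
Proof.
move=> hd hmu hv hin hmax.
have hd0 : (0 < d)%N by apply: leq_trans hd.
split.
- by move=> c r r0 hcr; apply: (parta hd0 hmu hv hin hmax r0 hcr).
- by move=> i; apply: (partb hd0 hmu hv hin hmax i).
- by move=> u hu; apply: (partc hd0 hmu hv hin hmax hu).
Qed.
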